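(* Let $N\in\mathbb{N}$ and let $f(x)=\sum_{n=1}^N\alpha_nx^n\mathbbm{1}_{\{x<0\}}+\sum_{n=1}^N\beta_nx^n\mathbbm{1}_{\{x\ge0\}}$ for $x\in\mathbb{R}$, where the coefficients $\alpha_1,\dots,\alpha_N,\beta_1,\dots,\beta_N$ are drawn independently from a distribution absolutely continuous with respect to Lebesgue measure. Let $\eta>0$ and consider gradient descent $x_{t+1}=x_t-\eta f'_+(x_t)$. Suppose $f'_+(0)<0$ or $f'_-(0)<0$. Then, with probability $1$, there exist $a=a(\boldsymbol\alpha,\boldsymbol\beta)<0<b=b(\boldsymbol\alpha,\boldsymbol\beta)$ and a finite $\tilde t=\tilde t(\eta,\boldsymbol\alpha,\boldsymbol\beta)>0$ such that, with $\chi=[a,b]$: whenever $x_t\in\chi$, there exists $0<t'\le\tilde t$ with $x_{t+t'}\notin\chi$.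
   Context: Here $f'_+(x)=\lim_{h\to0^+}\frac{f(x+h)-f(x)}{h}$ and $f'_-(x)=\lim_{h\to0^+}\frac{f(x-h)-f(x)}{h}$ denote the one-sided directional derivatives of $f$ at $x$ in the directions $+1$ and $-1$, respectively. *)

(* Defs.v *)
From HB Require Import structures.
From mathcomp Require Import all_boot all_order all_algebra.
From mathcomp Require Import all_classical all_reals all_analysis.
Set Implicit Arguments. Unset Strict Implicit. Unset Printing Implicit Defensive.
Import Order.TTheory GRing.Theory Num.Theory.
Import numFieldNormedType.Exports.
Local Open Scope classical_set_scope.
Local Open Scope ring_scope.

(* f(x) = sum_{n=1}^N alpha_n x^n 1_{x<0} + sum_{n=1}^N beta_n x^n 1_{x>=0};
   alpha_n is (alpha (n-1)), i.e. index i : 'I_N stands for n = i+1. *)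
Definition pw_poly (R : realType) (N : nat) (alpha beta : 'I_N -> R) (x : R) : R :=
  (if x < 0 then \sum_(i < N) alpha i * x ^+ i.+1 else 0)
  + (if 0 <= x then \sum_(i < N) beta i * x ^+ i.+1 else 0).

(* One-sided directional derivative of f at x in direction v:
   lim_{h -> 0+} (f(x + h v) - f(x)) / h.
   f'_+(x) = dirder f x 1 and f'_-(x) = dirder f x (-1). *)
Definition dirder (R : realType) (f : R -> R) (x v : R) : R :=
  lim ((fun h : R => (f (x + h * v) - f x) / h) @ 0^'+).

(* Mutual independence of a finite family of real random variables:
   the product rule holds for every choice of Borel sets (taking B i = setT
   recovers every finite subfamily). *)
Definition mutually_independent d (T : measurableType d) (R : realType)
    (P : probability T R) (I : finType) (X : I -> T -> R) : Prop :=
  forall B : I -> set R, (forall i, measurable (B i)) ->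
    P (\bigcap_i (X i @^-1` B i)) = (\prod_(i : I) P (X i @^-1` B i))%E.

(* Main.v *)
Require Import Defs.
From HB Require Import structures.
From mathcomp Require Import all_boot all_order all_algebra.
From mathcomp Require Import all_classical all_reals all_analysis.
From mathcomp Require Import ring lra.
Import Order.TTheory GRing.Theory Num.Theory.
Import numFieldNormedType.Exports.
Local Open Scope classical_set_scope.
Local Open Scope ring_scope.
Set Implicit Arguments. Unset Strict Implicit. Unset Printing Implicit Defensive.

Section S.
Variable R : realType.
Variable N : nat.
Implicit Types c : 'I_N -> R.

Definition q c (y : R) := \sum_(i < N) c i * y ^+ i.+1.
Definition dq c (y : R) := \sum_(i < N) c i * ((i.+1)%:R * y ^+ i).

Lemma q_derivable c x v : derivable (q c) x v /\ 'D_v (q c) x = dq c x * v.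
Proof.
have Hi : forall i, is_derive x v (fun y : R => c i * y ^+ i.+1) (c i * ((i.+1)%:R * x ^+ i * v)).
  move=> i.
  have := @is_deriveZ R R R (fun y : R => y ^+ i.+1) (c i) x v ((i.+1)%:R *: x ^+ i *: v).
  apply.
  apply: DeriveDef; first exact: exprn_derivable.
  by rewrite exp_derive.
have E : q c = \sum_(i < N) (fun y : R => c i * y ^+ i.+1).
  by rewrite fct_sumE.
have := @is_derive_sum R R R N (fun i (y : R) => c i * y ^+ i.+1) x v _ Hi.
rewrite -E => H; split; first exact: ex_derive.
rewrite derive_val /dq big_distrl /=; apply: eq_bigr => i _; ring.
Qed.
End S.

Lemma lim_right (R : realType) (g F : R -> R) (x v : R) :
  derivable g x v ->
  (\forall h \near 0^'+, F h = (g (x + h * v) - g x) / h) ->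
  lim (F @ 0^'+) = 'D_v g x.
Proof.
move=> dg E.
apply: cvg_lim => //.
have H1 : (fun h : R => h^-1 *: ((g \o shift x) (h *: v) - g x)) @ 0^'+ --> 'D_v g x.
  have Hd : (fun h : R => h^-1 *: ((g \o shift x) (h *: v) - g x)) @ 0^' --> 'D_v g x := dg.
  apply: cvg_trans Hd.
  apply: cvg_app.
  apply: within_subset => y /= hy.
  by rewrite gt_eqF.
apply: cvg_trans H1.
apply: near_eq_cvg.
near=> h.
rewrite (near E h) /= //. idtac.
rewrite [RHS]mulrC; change (h^-1 * (g (h * v + x) - g x) = h^-1 * (g (x + h * v) - g x)); by rewrite [h * v + x]addrC.
Unshelve. all: by end_near.
Qed.

Section D.
Variable R : realType.
Variable N : nat.
Implicit Types c : 'I_N -> R.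

Lemma pw_neg (a b : 'I_N -> R) y : y < 0 -> pw_poly a b y = q a y.
Proof. by move=> y0; rewrite /pw_poly y0 (lt_geF y0) addr0. Qed.

Lemma pw_nneg (a b : 'I_N -> R) y : 0 <= y -> pw_poly a b y = q b y.
Proof. by move=> y0; rewrite /pw_poly (le_gtF y0) y0 add0r. Qed.

Lemma q0 c : q c 0 = 0.
Proof. by rewrite /q big1 // => i _; rewrite expr0n mulr0. Qed.

Lemma dirder_neg (a b : 'I_N -> R) x : x < 0 -> dirder (pw_poly a b) x 1 = dq a x.
Proof.
move=> x0; have [dg Dg] := q_derivable a x 1.
rewrite /dirder (lim_right dg) ?Dg ?mulr1 //.
near=> h.
rewrite !pw_neg // mulr1.
have : h < - x by near: h; apply: nbhs_right_lt; rewrite oppr_gt0.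
lra.
Unshelve. all: by end_near.
Qed.

Lemma dirder_nneg (a b : 'I_N -> R) x : 0 <= x -> dirder (pw_poly a b) x 1 = dq b x.
Proof.
move=> x0; have [dg Dg] := q_derivable b x 1.
rewrite /dirder (lim_right dg) ?Dg ?mulr1 //.
near=> h.
rewrite !pw_nneg // mulr1.
have : 0 < h by near: h; apply: nbhs_right_gt.
lra.
Unshelve. all: by end_near.
Qed.

Lemma dirder_0N (a b : 'I_N -> R) : dirder (pw_poly a b) 0 (-1) = - dq a 0.
Proof.
have [dg Dg] := q_derivable a 0 (-1).
rewrite /dirder (lim_right dg) ?Dg ?mulrN1 //.
near=> h.
have h0 : 0 < h by near: h; apply: nbhs_right_gt.
rewrite (pw_nneg a b (lexx 0)) (@pw_neg a b (0 + h * -1)); last lra.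
by rewrite !q0.
Unshelve. all: by end_near.
Qed.
End D.
Lemma dq_cont (R : realType) N (c : 'I_N -> R) : continuous (dq c).
Proof.
rewrite /dq.
apply: (@continuous_big R 'I_N +%R 0 xpredT add_continuous R (index_enum _)
   (fun i y => c i * ((i.+1)%:R * y ^+ i))).
move=> i _ y.
apply: (@continuousM _ _ (cst (c i)) (fun y0 : R => (i.+1)%:R * y0 ^+ i)); first exact: cst_continuous.
apply: (@continuousM _ _ (cst (i.+1)%:R) (fun y0 : R => y0 ^+ i)); first exact: cst_continuous.
exact: exprn_continuous.
Qed.

Lemma dq_near (R : realType) N (c : 'I_N -> R) e : 0 < e ->
  exists2 d : R, 0 < d & forall y : R, `|y| < d -> `|dq c 0 - dq c y| < e.
Proof.
move=> e0.
have := @dq_cont R N c 0 => /cvgrPdist_lt /(_ e e0).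
rewrite nearE /= => -[d /= d0 Hd].
exists d => // y yd; apply: Hd => /=.
by rewrite sub0r normrN.
Qed.

Lemma dq0 (R : realType) n (c : 'I_n.+1 -> R) : dq c 0 = c ord0.
Proof.
rewrite /dq big_ord_recl /= expr0 mulr1 mulr1 big1 ?addr0 // => i _.
by rewrite expr0n /= !mulr0.
Qed.
Lemma pres (R : realType) (s sa sb c e gy gy' y y' : R) :
  (s = 1 \/ s = -1) -> (sa = 1 \/ sa = -1) -> (sb = 1 \/ sb = -1) ->
  (sb = -1 \/ sa = 1) -> 0 < c -> 0 < e ->
  c <= s * gy -> s * (y' - y) <= - e ->
  (y < 0 -> c <= sa * gy) -> (0 <= y -> c <= sb * gy) ->
  (y' < 0 -> c <= sa * gy') -> (0 <= y' -> c <= sb * gy') -> c <= s * gy'.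
Proof.
move=> Hs Ha Hb H c0 e0 H1 H2 F1 F2 F3 F4.
case: (ltP y 0) => hy; case: (ltP y' 0) => hy';
  try (have {F1} F1 := F1 hy); try (have {F2} F2 := F2 hy);
  try (have {F3} F3 := F3 hy'); try (have {F4} F4 := F4 hy');
  by case: Hs => ?; case: Ha => ?; case: Hb => ?; case: H => ?; subst; lra.
Qed.

Lemma escape (R : realType) (g : R -> R) (eta a0 b0 d : R) :
  0 < eta -> a0 != 0 -> b0 != 0 -> (b0 < 0 \/ 0 < a0) -> 0 < d ->
  (forall y, `|y| < d -> (y < 0 -> `|a0 - g y| < `|a0| / 2)
                     /\ (0 <= y -> `|b0 - g y| < `|b0| / 2)) ->
  exists a b : R, a < 0 < b /\
    exists tt : nat, (0 < tt)%N /\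
      forall x : nat -> R,
        (forall t, x t.+1 = x t - eta * g (x t)) ->
        forall t, a <= x t <= b ->
          exists t' : nat, (0 < t' <= tt)%N /\ ~ (a <= x (t + t') <= b).
Proof.
move=> eta0 a00 b00 Hab d0 Hd.
pose c := Num.min `|a0| `|b0| / 2.
have c0 : 0 < c.
  by rewrite /c divr_gt0 // lt_min !normr_gt0 a00 b00.
have ca : c <= `|a0| / 2 by rewrite /c ler_pM2r ?ge_min ?lexx // invr_gt0.
have cb : c <= `|b0| / 2 by rewrite /c ler_pM2r ?ge_min ?lexx ?orbT // invr_gt0.
pose sa : R := if 0 < a0 then 1 else -1.
pose sb : R := if 0 < b0 then 1 else -1.
have Hsa : sa = 1 \/ sa = -1 by rewrite /sa; case: ifP; [left|right].
have Hsb : sb = 1 \/ sb = -1 by rewrite /sb; case: ifP; [left|right].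
have H : sb = -1 \/ sa = 1.
  case: Hab => h; [left; rewrite /sb ltNge (ltW h) //|right; rewrite /sa h //].
have Fa : forall y, -(d/2) <= y -> y < 0 -> c <= sa * g y.
  move=> y y1 y2.
  have yd : `|y| < d by rewrite ltr_norml; apply/andP; split; lra.
  have := (Hd y yd).1 y2; rewrite ltr_norml => /andP[h1 h2].
  rewrite /sa; case: ifP => ha.
    by move: ca h1 h2; rewrite gtr0_norm //; lra.
  have ha' : a0 < 0 by rewrite lt_neqAle a00 /= leNgt ha.
  by move: ca h1 h2; rewrite ltr0_norm //; lra.
have Fb : forall y, 0 <= y -> y <= d/2 -> c <= sb * g y.
  move=> y y1 y2.
  have yd : `|y| < d by rewrite ltr_norml; apply/andP; split; lra.
  have := (Hd y yd).2 y1; rewrite ltr_norml => /andP[h1 h2].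
  rewrite /sb; case: ifP => hb.
    by move: cb h1 h2; rewrite gtr0_norm //; lra.
  have hb' : b0 < 0 by rewrite lt_neqAle b00 /= leNgt hb.
  by move: cb h1 h2; rewrite ltr0_norm //; lra.
exists (-(d/2)), (d/2); split; first by apply/andP; split; lra.
have ec0 : 0 < eta * c by rewrite mulr_gt0.
pose tt := (Num.truncn ((d/2 - -(d/2)) / (eta * c))).+1.
have Htt : d/2 - -(d/2) < tt%:R * (eta * c).
  by rewrite -ltr_pdivrMr // truncnS_gt.
exists tt; split => // x Hx t Ht.
case: (pselect (exists t' : nat, (0 < t' <= tt)%N /\ ~ (-(d/2) <= x (t + t') <= d/2))) => // Hno.
exfalso.
have Hin : forall k, (k <= tt)%N -> -(d/2) <= x (t + k) <= d/2.
  move=> [|k] hk; first by rewrite addr0.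
  apply: contrapT => hn; apply: Hno; exists k.+1; split => //.
pose s : R := if x t < 0 then sa else sb.
have Hs : s = 1 \/ s = -1 by rewrite /s; case: ifP.
have Inv : forall k, (k <= tt)%N ->
   c <= s * g (x (t + k)) /\ s * (x (t + k) - x t) <= - (k%:R * (eta * c)).
  elim => [|k IH] hk.
    rewrite addr0 subrr mulr0 mul0r oppr0 lexx; split => //.
    move/andP: Ht => [t1 t2]; rewrite /s; case: ifP => xt.
      exact: Fa.
    by apply: Fb => //; rewrite leNgt xt.
  have hk' : (k <= tt)%N by apply: ltnW.
  have [I1 I2] := IH hk'.
  have E : x (t + k.+1) = x (t + k) - eta * g (x (t + k)) by rewrite -Hx; congr x; exact: addnS.
  have M : eta * c <= eta * (s * g (x (t + k))) by rewrite ler_wpM2l // ltW.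
  have E2 : s * (x (t + k.+1) - x (t + k)) = - (eta * (s * g (x (t + k)))).
    by rewrite E; ring.
  move/andP: (Hin _ hk') => [y1 y2].
  move/andP: (Hin _ hk) => [y1' y2'].
  split.
    apply: (@pres R s sa sb c (eta * c) (g (x (t + k))) (g (x (t + k.+1)))
              (x (t + k)) (x (t + k.+1))) => //.
    - lra.
    - by move=> h; apply: Fa.
    - by move=> h; apply: Fb.
    - by move=> h; apply: Fa.
    - by move=> h; apply: Fb.
  have -> : s * (x (t + k.+1) - x t) = s * (x (t + k.+1) - x (t + k)) + s * (x (t + k) - x t) by ring.
  rewrite E2 -addn1 natrD; lra.
have [_ I2] := Inv tt (leqnn tt).
move/andP: (Hin tt (leqnn tt)) => [y1 y2].
move/andP: Ht => [t1 t2].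
by case: Hs => hs; rewrite hs in I2; lra.
Qed.

Theorem proposition2 (R : realType) (d : measure_display) (T : measurableType d)
  (P : probability T R) (N : nat) (mu : probability R R)
  (X : 'I_N + 'I_N -> T -> R) :
  mu `<< lebesgue_measure ->
  (forall k, measurable_fun setT (X k)) ->
  (forall k (A : set R), measurable A -> P (X k @^-1` A) = mu A) ->
  mutually_independent P X ->
  forall eta : R, 0 < eta ->
  {ae P, forall w,
    (dirder (pw_poly (fun i => X (inl i) w) (fun i => X (inr i) w)) 0 1 < 0
     \/ dirder (pw_poly (fun i => X (inl i) w) (fun i => X (inr i) w)) 0 (-1) < 0) ->
    exists a b : R, a < 0 < b /\
    exists tt : nat, (0 < tt)%N /\
      forall x : nat -> R,
        (forall t, x t.+1 = x t - eta * 
           dirder (pw_poly (fun i => X (inl i) w) (fun i => X (inr i) w)) (x t) 1) ->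
        forall t, a <= x t <= b ->
          exists t' : nat, (0 < t' <= tt)%N /\ ~ (a <= x (t + t') <= b)}.
Proof.
move=> Hac mX HX _ eta eta0.
case: N X mX HX => [|n] X mX HX.
  apply: aeW => w.
  rewrite (dirder_nneg _ _ (lexx 0)) dirder_0N /dq !big_ord0 oppr0 ltxx.
  by case.
have nA : forall k, P.-negligible (X k @^-1` [set 0]).
  move=> k; exists (X k @^-1` [set 0]); split => //.
    by rewrite -[X k @^-1` _]setTI; apply: mX.
  rewrite HX //.
  apply: (Hac [set 0]) => //.
  move=> A mA A0.
  apply/eqP; rewrite -measure_le0 -(lebesgue_measure_set1 (0:R)).
  by rewrite le_measure // inE.
have HS : \forall w \ae P, X (inl ord0) w != 0 /\ X (inr ord0) w != 0.
  apply: negligibleS (negligibleU (nA (inl ord0)) (nA (inr ord0))).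
  move=> w /= hw.
  case: (eqVneq (X (inl ord0) w) 0) => h1; first by left.
  case: (eqVneq (X (inr ord0) w) 0) => h2; first by right.
  by exfalso; apply: hw.
apply: filterS HS => w [h1 h2] Hyp.
set al := fun i => X (inl i) w.
set be := fun i => X (inr i) w.
have H' : X (inr ord0) w < 0 \/ 0 < X (inl ord0) w.
  move: Hyp; rewrite (dirder_nneg _ _ (lexx 0)) dirder_0N !dq0.
  by case => h; [left|right; rewrite -oppr_lt0].
have ha : 0 < `|X (inl ord0) w| / 2 by rewrite divr_gt0 // normr_gt0.
have hb : 0 < `|X (inr ord0) w| / 2 by rewrite divr_gt0 // normr_gt0.
have [da da0 Hda] := dq_near al ha.
have [db db0 Hdb] := dq_near be hb.
have := @escape R (fun y => dirder (pw_poly al be) y 1) eta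
   (X (inl ord0) w) (X (inr ord0) w) (Num.min da db) eta0 h1 h2 H'.
apply.
  by rewrite lt_min da0 db0.
move=> y; rewrite lt_min => /andP[yda ydb]; split => hy.
  by rewrite dirder_neg //; move: (Hda y yda); rewrite dq0.
by rewrite dirder_nneg //; move: (Hdb y ydb); rewrite dq0.
Qed.
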